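(* Let $g(x)\in\mathbb{Z}[x]$ be irreducible in $\mathbb{Z}[x]$. If there is an odd integer $k$ with $g(k^2)\equiv 2\pmod 4$, then $g(x^2)$ is irreducible in $\mathbb{Z}[x]$.
   Context: Irreducibility is in the ring $\mathbb{Z}[x]$: a nonzero non-unit element is irreducible if it is not a product of two non-units. *)

(* Defs.v *)
From HB Require Import structures.
From mathcomp Require Import all_boot all_order all_algebra.
Set Implicit Arguments. Unset Strict Implicit. Unset Printing Implicit Defensive.
Import Order.TTheory GRing.Theory Num.Theory.
Local Open Scope ring_scope.

Definition irreducible_Zx (p : {poly int}) : Prop :=
  [/\ p != 0, p \isn't a GRing.unit &
      forall a b : {poly int}, p = a * b ->
        a \is a GRing.unit \/ b \is a GRing.unit].

(* Main.v *)
Require Import Defs.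
From HB Require Import structures.
From mathcomp Require Import all_boot all_order all_algebra.
From mathcomp Require Import ring lra zify.
Import Order.TTheory GRing.Theory Num.Theory.
Local Open Scope ring_scope.

Definition normp (a : {poly int}) := even_poly a ^+ 2 - 'X * odd_poly a ^+ 2.

Lemma X2comp (p : {poly int}) : 'X^2 \Po p = p ^+ 2.
Proof. by rewrite !expr2 comp_polyM comp_polyX. Qed.

Lemma normpE a : normp a \Po 'X^2 = a * (a \Po - 'X).
Proof.
rewrite /normp.
set e := even_poly a; set o := odd_poly a.
have Ha : a = e \Po 'X^2 + (o \Po 'X^2) * 'X by rewrite poly_even_odd.
have H1 : a \Po - 'X = e \Po 'X^2 - (o \Po 'X^2) * 'X.
  rewrite {1}Ha comp_polyD comp_polyM -!comp_polyA X2comp sqrrN comp_polyX.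
  by rewrite mulrN.
rewrite H1 {1}Ha comp_polyB !expr2 !comp_polyM comp_polyX -!expr2.
ring.
Qed.

Lemma comp_X2_inj (p q : {poly int}) : p \Po 'X^2 = q \Po 'X^2 -> p = q.
Proof.
move=> E; apply/polyP => i.
have := congr1 (fun r : {poly int} => r`_(i * 2)%N) E => /=.
by rewrite !coef_comp_poly_Xn // dvdn_mull // mulnK.
Qed.

Lemma unit_int (x : int) : x \is a GRing.unit -> x = 1 \/ x = -1.
Proof. by move=> /orP [/eqP|/eqP]; auto. Qed.

Lemma par (u : int) : exists s, u = s * 2 \/ u = s * 2 + 1.
Proof.
exists (u %/ 2)%Z; rewrite {1 3}(divz_eq u 2).
have : (0 <= u %% 2 < 2)%Z by rewrite modz_ge0 // ltz_pmod.
move: (u %% 2)%Z => r Hr.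
have [->|->] : r = 0 \/ r = 1 by lia.
  by left; rewrite addr0.
by right.
Qed.

Lemma mod4 (u v z : int) : (z = 2 %[mod 4])%Z -> z = u ^+ 2 - v ^+ 2 \/ z = - (u ^+ 2 - v ^+ 2) -> False.
Proof.
move=> Hz Hc.
have Hz' : z = (z %/ 4)%Z * 4 + 2 by rewrite {1}(divz_eq z 4) Hz.
have [s [Hs|Hs]] := par u; have [t [Ht|Ht]] := par v;
 subst; set w := (z %/ 4)%Z in Hz' *; rewrite !expr2 in Hc; case: Hc; lia.
Qed.

Lemma unit_sq (x : int) : x \is a GRing.unit -> x * x = 1.
Proof. by move/unit_int => [->|->]. Qed.

Lemma unit_polyE (p : {poly int}) : p \is a GRing.unit ->
  p = (p`_0)%:P /\ p`_0 \is a GRing.unit.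
Proof. rewrite poly_unitE => /andP [/eqP Hs u]; split => //; by apply: size1_polyC; rewrite Hs. Qed.

Lemma prime_like g : irreducible_Zx g -> forall p q : {poly int},
  g %| p * q -> (g %| p) || (g %| q).
Proof.
move=> [gnz gnu girr] p q H.
set d := gcdp g q.
have [r Hr] := dvdpP_int (Pdiv.Idomain.dvdp_gcdl g q).
case: (girr _ _ Hr) => U.
  have Hs : size d = 1%N by rewrite -size_zprimitive; case/andP: U => /eqP.
  have cop : coprimep g q by rewrite /coprimep -/d Hs.
  by rewrite -(Pdiv.Idomain.Gauss_dvdpl p cop) H.
apply/orP; right.
have H1 : g %| zprimitive d.
  have -> : zprimitive d = g * r^-1 by rewrite Hr -mulrA mulrV // mulr1.
  exact: Pdiv.Idomain.dvdp_mulIl.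
have H2 : zprimitive d %| d.
  rewrite {2}[d]zpolyEprim -mul_polyC; exact: Pdiv.Idomain.dvdp_mulIr.
apply: (Pdiv.Idomain.dvdp_trans H1); apply: (Pdiv.Idomain.dvdp_trans H2).
exact: Pdiv.Idomain.dvdp_gcdr.
Qed.

Lemma side g a b : irreducible_Zx g -> (1 < size g)%N ->
  g * g = normp a * normp b -> b \isn't a GRing.unit -> g %| normp a ->
  exists w : int, w \is a GRing.unit /\ g = w%:P * normp a.
Proof.
move=> [gnz gnu girr] sg Hsq bnu Hd.
have [r Hr] := dvdpP_int Hd.
set P := zprimitive g in Hr.
set c := zcontents g.
have Hg : g = c%:P * P by rewrite mul_polyC -zpolyEprim.
have Pnz : P != 0 by rewrite zprimitive_eq0.
have sP : size P = size g by rewrite size_zprimitive.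
clearbody c P.
have cu : c \is a GRing.unit.
  case: (girr _ _ Hg) => U.
    by move: U; rewrite poly_unitE size_polyC coefC /= => /andP [].
  move: U; rewrite poly_unitE sP => /andP [/eqP Hs _].
  by rewrite Hs in sg.
have c2 := @unit_sq c cu.
have HP : P = r * normp b.
  apply: (mulfI Pnz); rewrite mulrA -Hr -Hsq Hg.
  rewrite mulrCA !mulrA -polyCM c2 mul1r; done.
have Hg2 : g = (c%:P * r) * normp b by rewrite -mulrA -HP.
case: (girr _ _ Hg2) => U; last first.
  exfalso; move/negP: bnu; apply.
  have [Hn _] := unit_polyE _ U.
  have : (b * (b \Po - 'X)) \is a GRing.unit.
    by rewrite -normpE Hn comp_polyC -Hn.
  by rewrite unitrM => /andP [].
move: U; rewrite unitrM => /andP [_ ru].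
have [Hr0 r0u] := unit_polyE _ ru.
move: Hr0 r0u; set r0 := r`_0 => Hr0 r0u.
exists (c * r0); split; first by rewrite unitrM cu.
rewrite Hr Hr0 {1}Hg polyCM -!mulrA; congr (_ * _).
by rewrite mulrCA -polyCM (@unit_sq r0 r0u) mulr1.
Qed.

Theorem lemma3 (g : {poly int}) :
  irreducible_Zx g ->
  (exists k : int, ~~ (2 %| k)%Z /\ (g.[k ^+ 2] = 2 %[mod 4])%Z) ->
  irreducible_Zx (g \Po 'X^2).
Proof.
move=> Hirr [k [_ hk]].
have Hirr' := Hirr; move: Hirr' => [gnz gnu girr].
have [sg|sg] := leqP (size g) 1.
  by rewrite (size1_polyC sg) comp_polyC -(size1_polyC sg).
have sf : (2 < size (g \Po 'X^2))%N.
  have := size_comp_poly g ('X^2); rewrite size_polyXn /=.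
  move: sg; case: (size g) => [|[|n]] //= _; case: (size _) => [|m] //= ->.
  by rewrite mulSn.
split.
- by rewrite -size_poly_gt0; apply: ltn_trans sf.
- by rewrite poly_unitE; apply/negP => /andP [/eqP H]; rewrite H in sf.
move=> a b Hf.
case: (boolP (a \is a GRing.unit)) => ua; first by left.
case: (boolP (b \is a GRing.unit)) => ub; first by right.
exfalso.
have Hsq : g * g = normp a * normp b.
  apply: comp_X2_inj; rewrite !comp_polyM !normpE.
  have Hm : (g \Po 'X^2) \Po - 'X = g \Po 'X^2.
    by rewrite -comp_polyA X2comp sqrrN.
  by rewrite -{2}Hm Hf comp_polyM; ring.
have Hdv : g %| normp a * normp b by rewrite -Hsq Pdiv.Idomain.dvdp_mulIl.
have [w [wu Hw]] : exists w : int, w \is a GRing.unit /\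
    (g = w%:P * normp a \/ g = w%:P * normp b).
  case/orP: (prime_like _ Hirr _ _ Hdv) => H.
    by have [w [? ?]] := side _ _ _ Hirr sg Hsq ub H; exists w; auto.
  rewrite [normp a * _]mulrC in Hsq.
  by have [w [? ?]] := side _ _ _ Hirr sg Hsq ua H; exists w; auto.
have key : forall p : {poly int}, (normp p).[k ^+ 2] =
   (even_poly p).[k ^+ 2] ^+ 2 - (k * (odd_poly p).[k ^+ 2]) ^+ 2.
  move=> p; rewrite /normp hornerD hornerN !hornerM hornerX. ring.
case: Hw => Hg; rewrite Hg hornerM hornerC key in hk;
  (case: (unit_int _ wu) => Hw; rewrite Hw ?mul1r ?mulN1r in hk);
  apply: (mod4 _ _ _ hk); auto.
Qed.
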